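(* Let $A$ be a subring of a prime ring $B$ that is left or right Goldie, and let $t$ be the Goldie rank of $B$. Let $N$ be the prime radical of $A$. Then $N^t=0$.
   Context: The prime radical of a ring is the intersection of its prime ideals. The Goldie rank of a prime left (or right) Goldie ring is the length of its (simple artinian) Goldie quotient ring as a module over itself. *)

(* Defs.v *)
From HB Require Import structures.
From mathcomp Require Import all_boot all_order all_algebra.
Set Implicit Arguments. Unset Strict Implicit. Unset Printing Implicit Defensive.
Import GRing.Theory.
Local Open Scope ring_scope.

Section RingDefs.
Variable R : nzRingType.

Definition subring (A : R -> Prop) : Prop :=
  A 1 /\ (forall x y, A x -> A y -> A (x - y)) /\ (forall x y, A x -> A y -> A (x * y)).

Definition ideal (A I : R -> Prop) : Prop :=
  (forall x, I x -> A x) /\ I 0 /\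
  (forall x y, I x -> I y -> I (x - y)) /\
  (forall a x, A a -> I x -> I (a * x) /\ I (x * a)).

Definition subset (I J : R -> Prop) : Prop := forall x, I x -> J x.

Inductive ideal_mul (I J : R -> Prop) : R -> Prop :=
  | im_prod x y : I x -> J y -> ideal_mul I J (x * y)
  | im_0 : ideal_mul I J 0
  | im_add u v : ideal_mul I J u -> ideal_mul I J v -> ideal_mul I J (u + v).

Definition prime_ideal (A P : R -> Prop) : Prop :=
  ideal A P /\ (exists a, A a /\ ~ P a) /\
  (forall I J, ideal A I -> ideal A J -> subset (ideal_mul I J) P ->
     subset I P \/ subset J P).

Definition prime_radical (A : R -> Prop) : R -> Prop :=
  fun x => A x /\ forall P, prime_ideal A P -> P x.

Fixpoint ideal_pow (A I : R -> Prop) (n : nat) : R -> Prop :=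
  match n with
  | O => A
  | S m => ideal_mul (ideal_pow A I m) I
  end.

Definition whole : R -> Prop := fun _ => True.

Definition prime_ring : Prop := prime_ideal whole (fun x => x = 0).

Definition left_ideal (L : R -> Prop) : Prop :=
  L 0 /\ (forall x y, L x -> L y -> L (x - y)) /\ (forall r x, L x -> L (r * x)).
Definition right_ideal (L : R -> Prop) : Prop :=
  L 0 /\ (forall x y, L x -> L y -> L (x - y)) /\ (forall r x, L x -> L (x * r)).

Definition lann (S : R -> Prop) : R -> Prop := fun r => forall s, S s -> r * s = 0.
Definition rann (S : R -> Prop) : R -> Prop := fun r => forall s, S s -> s * r = 0.

Definition same_set (I J : R -> Prop) : Prop := forall x, I x <-> J x.

Definition acc_lann : Prop :=
  forall S : nat -> (R -> Prop),
    (forall n, subset (lann (S n)) (lann (S n.+1))) ->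
    exists n, forall m, (n <= m)%N -> same_set (lann (S m)) (lann (S n)).
Definition acc_rann : Prop :=
  forall S : nat -> (R -> Prop),
    (forall n, subset (rann (S n)) (rann (S n.+1))) ->
    exists n, forall m, (n <= m)%N -> same_set (rann (S m)) (rann (S n)).

Definition independent (L : nat -> (R -> Prop)) : Prop :=
  forall (n : nat) (x : nat -> R), (forall i, L i (x i)) ->
    \sum_(i < n) x i = 0 -> forall i, (i < n)%N -> x i = 0.

Definition finite_udim_left : Prop :=
  ~ exists L : nat -> (R -> Prop),
      (forall i, left_ideal (L i)) /\ (forall i, exists x, L i x /\ x <> 0) /\ independent L.
Definition finite_udim_right : Prop :=
  ~ exists L : nat -> (R -> Prop),
      (forall i, right_ideal (L i)) /\ (forall i, exists x, L i x /\ x <> 0) /\ independent L.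

Definition left_goldie : Prop := acc_lann /\ finite_udim_left.
Definition right_goldie : Prop := acc_rann /\ finite_udim_right.

Definition regular (c : R) : Prop :=
  (forall x, c * x = 0 -> x = 0) /\ (forall x, x * c = 0 -> x = 0).

(* Composition length of R as a left (resp. right) module over itself:
   a chain 0 = L_0 < L_1 < ... < L_t = R of left (right) ideals with no
   left (right) ideal strictly between consecutive terms. *)
Definition strict_sub (I J : R -> Prop) : Prop := subset I J /\ ~ subset J I.

Definition left_length (t : nat) : Prop :=
  exists L : nat -> (R -> Prop),
    (forall i, left_ideal (L i)) /\ same_set (L 0%N) (fun x => x = 0) /\
    same_set (L t) whole /\
    (forall i, (i < t)%N -> strict_sub (L i) (L i.+1) /\
       forall M, left_ideal M -> subset (L i) M -> subset M (L i.+1) ->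
         same_set M (L i) \/ same_set M (L i.+1)).
Definition right_length (t : nat) : Prop :=
  exists L : nat -> (R -> Prop),
    (forall i, right_ideal (L i)) /\ same_set (L 0%N) (fun x => x = 0) /\
    same_set (L t) whole /\
    (forall i, (i < t)%N -> strict_sub (L i) (L i.+1) /\
       forall M, right_ideal M -> subset (L i) M -> subset M (L i.+1) ->
         same_set M (L i) \/ same_set M (L i.+1)).
End RingDefs.

(* Classical left (right) ring of quotients of B, given by an injective ring
   morphism f : B -> Q: images of regular elements are units of Q and every
   element of Q has the form f(c)^-1 f(a) (resp. f(a) f(c)^-1), c regular. *)
Definition left_quotient_ring (B Q : nzRingType) (f : {rmorphism B -> Q}) : Prop :=
  injective f /\
  (forall c, regular c -> exists u : Q, u * f c = 1 /\ f c * u = 1) /\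
  (forall q : Q, exists a c, regular c /\ f c * q = f a).
Definition right_quotient_ring (B Q : nzRingType) (f : {rmorphism B -> Q}) : Prop :=
  injective f /\
  (forall c, regular c -> exists u : Q, u * f c = 1 /\ f c * u = 1) /\
  (forall q : Q, exists a c, regular c /\ q * f c = f a).

(* t is the Goldie rank of the prime left (resp. right) Goldie ring B:
   the length of its Goldie quotient ring Q as a module over itself. *)
Definition goldie_rank (B : nzRingType) (t : nat) : Prop :=
  (left_goldie B /\ exists (Q : nzRingType) (f : {rmorphism B -> Q}),
      left_quotient_ring f /\ left_length Q t) \/
  (right_goldie B /\ exists (Q : nzRingType) (f : {rmorphism B -> Q}),
      right_quotient_ring f /\ right_length Q t).

(* Main.v *)
Require Import Defs.
From mathcomp Require Import all_boot all_order all_algebra.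
Local Open Scope ring_scope.
From Stdlib Require Import Classical ClassicalEpsilon.
From mathcomp Require Import zify.
Set Implicit Arguments. Unset Strict Implicit. Unset Printing Implicit Defensive.
Import GRing.Theory.

Section Core.
Variable Q : nzRingType.

Definition la (X : Q -> Prop) : Q -> Prop := fun z => forall s, X s -> z * s = 0.
Definition cl (X : Q -> Prop) : Q -> Prop := fun y => forall z, la X z -> z * y = 0.
Definition closedS (X : Q -> Prop) := forall x, cl X x -> X x.

Lemma cl_ext X x : X x -> cl X x.
Proof. by move=> Xx z /(_ x Xx). Qed.

Lemma cl_mono (X Y : Q -> Prop) : (forall x, X x -> Y x) -> forall x, cl X x -> cl Y x.
Proof. move=> XY x Hx z Hz; apply: Hx => s /XY; exact: Hz. Qed.

Lemma cl_closed X : closedS (cl X).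
Proof. move=> x Hx z Hz; apply: Hx => s Hs; exact: Hs _ Hz. Qed.

Lemma closed0 X : closedS X -> X 0.
Proof. by move=> H; apply: H => z _; rewrite mulr0. Qed.

Lemma closedB X x y : closedS X -> X x -> X y -> X (x - y).
Proof. by move=> H hx hy; apply: H => z Hz; rewrite mulrBr (Hz x) // (Hz y) // subr0. Qed.

Lemma closedD X x y : closedS X -> X x -> X y -> X (x + y).
Proof. by move=> H hx hy; apply: H => z Hz; rewrite mulrDr (Hz x) // (Hz y) // addr0. Qed.

Lemma la_left X : left_ideal (la X).
Proof.
split; first by move=> s _; rewrite mul0r.
split; first by move=> x y hx hy s Hs; rewrite mulrBl hx // hy // subr0.
by move=> r x hx s Hs; rewrite -mulrA hx // mulr0.
Qed.

Lemma left_add (M : Q -> Prop) x y : left_ideal M -> M x -> M y -> M (x + y).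
Proof.
case=> h0 [hB _] hx hy.
have := hB x (0 - y) hx (hB 0 y h0 hy). by rewrite sub0r opprK.
Qed.

Variable As : Q -> Prop.
Definition stab (X : Q -> Prop) := forall a r, As a -> X r -> X (a * r).
Definition good X := closedS X /\ stab X.

Definition chain (R : nat -> Q -> Prop) (m : nat) :=
  (forall x, R 0%N x -> x = 0) /\ R m 1 /\ (forall i, good (R i)) /\
  (forall i, (i < m)%N -> (forall x, R i x -> R i.+1 x) /\ exists x, R i.+1 x /\ ~ R i x).

Section Len.
Variable t : nat.
Variable L : nat -> Q -> Prop.
Hypothesis HL : forall i, left_ideal (L i).
Hypothesis H0 : forall x, L 0%N x -> x = 0.
Hypothesis Ht : forall x, L t x.
Hypothesis Hsub : forall i, (i < t)%N -> forall x, L i x -> L i.+1 x.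
Hypothesis Hmax : forall i, (i < t)%N -> forall M, left_ideal M ->
  (forall x, L i x -> M x) -> (forall x, M x -> L i.+1 x) ->
  same_set M (L i) \/ same_set M (L i.+1).

Definition dl (M : Q -> Prop) k : nat :=
  if excluded_middle_informative (exists x, M x /\ L k.+1 x /\ ~ L k x) then 1%N else 0%N.

Lemma dl1 M k : (exists x, M x /\ L k.+1 x /\ ~ L k x) -> dl M k = 1%N.
Proof. by rewrite /dl; case: excluded_middle_informative. Qed.
Lemma dl0 M k : ~ (exists x, M x /\ L k.+1 x /\ ~ L k x) -> dl M k = 0%N.
Proof. by rewrite /dl; case: excluded_middle_informative. Qed.

Fixpoint ell M k : nat := if k is k'.+1 then (ell M k' + dl M k')%N else 0%N.

Lemma ell_le M k : (ell M k <= k)%N.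
Proof.
elim: k => //= k IH; case: (classic (exists x, M x /\ L k.+1 x /\ ~ L k x)) => h.
  by rewrite dl1 // addn1 ltnS.
by rewrite dl0 // addn0 ltnW.
Qed.

Lemma ell_mono M M' : left_ideal M -> left_ideal M' -> (forall x, M x -> M' x) ->
  forall k, (k <= t)%N -> (ell M k <= ell M' k)%N /\
    (ell M k = ell M' k -> forall x, M' x -> L k x -> M x).
Proof.
move=> HM HM' MM'; elim=> [|k IH] hk.
  split=> // _ x _ /H0 ->; by case: HM.
have [IH1 IH2] := IH (ltnW hk).
have hdl : (dl M k <= dl M' k)%N.
  case: (classic (exists x, M x /\ L k.+1 x /\ ~ L k x)) => h; last by rewrite dl0.
  rewrite dl1 // dl1 //; case: h => x [h1 [h2 h3]]; exists x; split; auto.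
split; first by rewrite /= leq_add.
move=> /= Heq x Mx Lx.
have e1 : ell M k = ell M' k by apply/eqP; rewrite eqn_leq IH1 /=; rewrite -(leq_add2r (dl M k)) Heq leq_add2l.
have e2 : dl M k = dl M' k by move: Heq; rewrite e1 => /addnI.
case: (classic (L k x)) => [Lkx|nLkx]; first by apply: IH2.
have : dl M' k = 1%N by apply: dl1; exists x; split; auto.
rewrite -e2; case: (classic (exists x, M x /\ L k.+1 x /\ ~ L k x)); last by move/dl0 => ->.
move=> [m0 [Mm0 [Lm0 nLm0]]] _.
pose K := fun y => exists m l, M m /\ L k.+1 m /\ L k l /\ y = m + l.
have HK : left_ideal K.
  split; first by exists 0, 0; case: HM => h0 _; case: (HL k) => l0 _; case: (HL k.+1) => l0' _;
    rewrite addr0.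
  split.
    move=> y z [m1 [l1 [a1 [b1 [c1 ->]]]]] [m2 [l2 [a2 [b2 [c2 ->]]]]].
    exists (m1 - m2), (l1 - l2); split; first by case: HM => _ [hB _]; apply: hB.
    split; first by case: (HL k.+1) => _ [hB _]; apply: hB.
    split; first by case: (HL k) => _ [hB _]; apply: hB.
    by rewrite opprD addrACA.
  move=> r y [m1 [l1 [a1 [b1 [c1 ->]]]]]; exists (r * m1), (r * l1).
  split; first by case: HM => _ [_ hm]; apply: hm.
  split; first by case: (HL k.+1) => _ [_ hm]; apply: hm.
  split; first by case: (HL k) => _ [_ hm]; apply: hm.
  by rewrite mulrDr.
have hkt : (k < t)%N by [].
case: (Hmax hkt HK).
- move=> y Ly; exists 0, y; split; first by case: HM.
  split; first by case: (HL k.+1).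
  by rewrite add0r.
- move=> y [m1 [l1 [a1 [b1 [c1 ->]]]]]; apply: left_add => //; exact: Hsub hkt _ c1.
- move=> H; exfalso; apply: nLm0; apply: (proj1 (H m0)).
  exists m0, 0; split=> //; split=> //; split; last by rewrite addr0.
  by case: (HL k).
- move=> H; have [m1 [l1 [a1 [b1 [c1 e]]]]] := proj2 (H x) Lx.
  have Ml1 : M' l1.
    have -> : l1 = x - m1 by rewrite e addrC addKr.
    by case: HM' => _ [hB _]; apply: hB => //; apply: MM'.
  have := IH2 e1 l1 Ml1 c1; rewrite e => Ml. exact: left_add.
Qed.

Lemma ell_strict M M' : left_ideal M -> left_ideal M' -> (forall x, M x -> M' x) ->
  (exists x, M' x /\ ~ M x) -> (ell M t < ell M' t)%N.
Proof.
move=> HM HM' MM' [x [M'x nMx]].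
have [h1 h2] := ell_mono HM HM' MM' (leqnn t).
rewrite ltn_neqAle h1 andbT; apply/eqP => e; apply: nMx; exact: h2.
Qed.

Lemma chain_bound R m : chain R m -> (m <= t)%N.
Proof.
case=> _ [_ [Hg Hs]].
have step : forall i, (i < m)%N -> (ell (la (R i.+1)) t < ell (la (R i)) t)%N.
  move=> i him; have [sub [x [Rx nRx]]] := Hs i him.
  apply: ell_strict; try exact: la_left.
    by move=> z Hz s Hs'; apply: Hz; apply: sub.
  apply: NNPP => H; apply: nRx; apply: (proj1 (Hg i)) => z Hz.
  apply: NNPP => nz; apply: H; exists z; split=> // Hz'; apply: nz; exact: Hz'.
have : forall i, (i <= m)%N -> (ell (la (R i)) t + i <= ell (la (R 0%N)) t)%N.
  elim=> [|i IH] hi; first by rewrite addn0.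
  have := IH (ltnW hi); have := step i hi; rewrite addnS; move=> a b.
  by apply: leq_trans b; rewrite -addSn leq_add2r.
move=> /(_ m (leqnn m)) h; apply: leq_trans (leq_trans (leq_addl _ _) h) (ell_le _ _).
Qed.
End Len.

Lemma ex_max (P : nat -> Prop) t : P 1%N -> (forall m, P m -> (m <= t)%N) ->
  exists m, P m /\ forall k, P k -> (k <= m)%N.
Proof.
move=> P1 Pb.
suff H : forall d m, P m -> (t - m <= d)%N -> exists m, P m /\ forall k, P k -> (k <= m)%N.
  exact: (H t 1%N P1 (leq_subr _ _)).
elim=> [|d IH] m Pm hd.
  exists m; split=> // k /Pb hk; apply: leq_trans hk _; by rewrite -subn_eq0 -leqn0.
case: (classic (forall k, P k -> (k <= m)%N)) => [H|H]; first by exists m.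
have [k Hk] := not_all_ex_not _ _ H.
have [Pk nk] := imply_to_and _ _ Hk.
apply: (IH k Pk); have := Pb k Pk; have := Pb m Pm; move: nk hd.
clear; lia.
Qed.

Lemma insert_chain R m j M : chain R m -> (j < m)%N -> good M ->
  (forall x, R j x -> M x) -> (forall x, M x -> R j.+1 x) ->
  (exists x, M x /\ ~ R j x) -> (exists x, R j.+1 x /\ ~ M x) ->
  chain (fun k => if (k <= j)%N then R k else if k == j.+1 then M else R k.-1) m.+1.
Proof.
move=> [H0 [Hm [Hg Hs]]] hj hM s1 s2 e1 e2.
split; first by [].
split.
  have -> : (m.+1 <= j)%N = false by move: hj; clear; lia.
  by have -> : (m.+1 == j.+1) = false by move: hj; clear; lia.
split; first by move=> i; case: ifP => _ //; case: ifP => _.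
move=> i hi; cbv beta.
case: (ltngtP i j) => h.
-   apply: Hs; exact: ltn_trans hj.
- case: (eqVneq i j.+1) => [->|hne].
    have -> : (j.+2 == j.+1) = false by clear; lia.
    by split.
  have hij : (j.+1 < i)%N by move: h hne; clear; lia.
  have hi' : (i.-1 < m)%N by move: hi hij; clear; lia.
  have -> : (i.+1 == j.+1) = false by move: hij; clear; lia.
  rewrite /=; have := Hs _ hi'; rewrite prednK //; move: hij; clear; lia.
- by rewrite h eqxx; split.
Qed.
Lemma chain1 : chain (fun i => if i is 0%N then (fun x : Q => x = 0) else (fun _ => True)) 1%N.
Proof.
split; first by [].
split; first by [].
split.
  case=> [|i]; split => //.
  - move=> x Hx; have := Hx 1; rewrite mul1r; apply => s ->; by rewrite mulr0.
  - by move=> a r _ ->; rewrite mulr0.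
case=> // _; split => //; exists 1; split => //; exact/eqP/oner_neq0.
Qed.

Theorem core t : left_length Q t -> exists m (R : nat -> Q -> Prop), (m <= t)%N /\ chain R m /\
  forall j, (j < m)%N -> forall I J : Q -> Prop,
    (forall x, I x -> As x) -> (forall x, J x -> As x) ->
    (forall a b, As a -> J b -> J (a * b)) ->
    (forall i b r, I i -> J b -> R j.+1 r -> R j (i * b * r)) ->
    (forall b r, J b -> R j.+1 r -> R j (b * r)) \/ (forall i r, I i -> R j.+1 r -> R j (i * r)).
Proof.
case=> L [HL [H0 [Ht Hst]]].
have H0' : forall x, L 0%N x -> x = 0 by move=> x /H0.
have Ht' : forall x, L t x by move=> x; apply/Ht.
have Hsub : forall i, (i < t)%N -> forall x, L i x -> L i.+1 x.
  by move=> i hi; case: (Hst i hi) => [[h _] _].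
have Hmax : forall i, (i < t)%N -> forall M, left_ideal M ->
  (forall x, L i x -> M x) -> (forall x, M x -> L i.+1 x) ->
  same_set M (L i) \/ same_set M (L i.+1).
  by move=> i hi; case: (Hst i hi) => _ h.
have bound := chain_bound HL H0' Ht' Hsub Hmax.
have [m [[R HR] maxm]] := @ex_max (fun m => exists R, chain R m) t (ex_intro (fun R => chain R 1%N) _ chain1)
  (fun m '(ex_intro R HR) => bound R m HR).
exists m, R; split; first exact: bound HR.
split; first exact: HR.
have [_ [_ [Hg Hs]]] := HR.
move=> j hj I J hI hJ hJa hIJ.
have unref : forall M, good M -> (forall x, R j x -> M x) -> (forall x, M x -> R j.+1 x) ->
    same_set M (R j) \/ same_set M (R j.+1).
  move=> M gM s1 s2.
  case: (classic (exists x, M x /\ ~ R j x)) => [e1|ne1]; last first.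
    left => x; split; last exact: s1.
    move=> Mx; apply: NNPP => nR; apply: ne1; by exists x.
  case: (classic (exists x, R j.+1 x /\ ~ M x)) => [e2|ne2]; last first.
    right => x; split; first exact: s2.
    move=> Rx; apply: NNPP => nM; apply: ne2; by exists x.
  exfalso; have := maxm m.+1 (ex_intro (fun R => chain R m.+1) _ (insert_chain HR hj gM s1 s2 e1 e2)).
  by rewrite ltnn.
pose S := fun q => (exists b r, J b /\ R j.+1 r /\ q = b * r) \/ R j q.
have gM : good (cl S).
  split; first exact: cl_closed.
  move=> a y Ha Hy z Hz; rewrite mulrA; apply: Hy => s [[b [r [Jb [Rr ->]]]]|Rs].
    rewrite -mulrA mulrA -mulrA; apply: Hz; left; exists (a * b), r; split; first exact: hJa.
    by split=> //; rewrite mulrA.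
  rewrite -mulrA; apply: Hz; right; exact: (proj2 (Hg j)).
have s1 : forall x, R j x -> cl S x by move=> x Rx; apply: cl_ext; right.
have s2 : forall x, cl S x -> R j.+1 x.
  move=> x Hx; apply: (proj1 (Hg j.+1)); apply: (cl_mono _ Hx).
  move=> q [[b [r [Jb [Rr ->]]]]|Rq]; first exact: (proj2 (Hg j.+1)) (hJ b Jb) Rr.
  exact: (proj1 (Hs j hj)).
case: (unref _ gM s1 s2) => H.
  left => b r Jb Rr; apply/(H (b * r)); apply: cl_ext; left; by exists b, r.
right => i r Ii Rr; apply: (proj1 (Hg j)) => z Hz.
have Mr : cl S r by apply/(H r).
rewrite mulrA; apply: Mr => s [[b [r' [Jb [Rr' ->]]]]|Rs].
  rewrite -mulrA [i * _]mulrA; apply: Hz; exact: hIJ.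
rewrite -mulrA; apply: Hz; exact: (proj2 (Hg j)) (hI i Ii) Rs.
Qed.
End Core.
Lemma sub_A0 (B : nzRingType) (A : B -> Prop) : subring A -> A 0.
Proof. by case=> h1 [hB _]; have := hB 1 1 h1 h1; rewrite subrr. Qed.

Lemma left_case (B Qr : nzRingType) (A : B -> Prop) (t : nat) (f : {rmorphism B -> Qr}) :
  subring A -> injective f -> left_length Qr t ->
  forall x : B, ideal_pow A (prime_radical A) t x -> x = 0.
Proof.
move=> sA finj Hlen.
pose As := fun q => exists a, A a /\ q = f a.
have [m [R [hmt [HR Hprime]]]] := core As Hlen.
have [H0 [Hm [Hg Hs]]] := HR.
have R0 : forall j, R j 0 by move=> j; apply: closed0; exact: (proj1 (Hg j)).
have stabA : forall j a r, A a -> R j r -> R j (f a * r).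
  by move=> j a r Aa Rr; apply: (proj2 (Hg j)) => //; exists a.
case: sA => [A1 [AB AM]].
pose PB j := fun x => A x /\ forall r, R j.+1 r -> R j (f x * r).
have Pprime : forall j, (j < m)%N -> prime_ideal A (PB j).
  move=> j hj; split; [split; [|split; [|split]] | split].
  - by move=> x [].
  - split; first exact: sub_A0.
    by move=> r _; rewrite rmorph0 mul0r.
  - move=> x y [Ax Hx] [Ay Hy]; split; first exact: AB.
    move=> r Rr; rewrite rmorphB mulrBl; apply: closedB; [exact: (proj1 (Hg j))|auto|auto].
  - move=> a x Aa [Ax Hx]; split; split; try exact: AM.
    + by move=> r Rr; rewrite rmorphM -mulrA; apply: stabA => //; apply: Hx.
    + by move=> r Rr; rewrite rmorphM -mulrA; apply: Hx; apply: stabA.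
  - exists 1; split => // -[_ H]; have [_ [x [Rx nRx]]] := Hs j hj.
    by apply: nRx; have := H x Rx; rewrite rmorph1 mul1r.
  - move=> I J [hIA _] [hJA [_ [_ hJm]]] Hsub.
    have := Hprime j hj (fun q => exists i, I i /\ q = f i) (fun q => exists b, J b /\ q = f b).
    case.
    + by move=> q [i [Ii ->]]; exists i; split => //; apply: hIA.
    + by move=> q [i [Ii ->]]; exists i; split => //; apply: hJA.
    + move=> a b [a0 [Aa0 ->]] [b0 [Jb0 ->]]; exists (a0 * b0); split; last by rewrite rmorphM.
      exact: (proj1 (hJm _ _ Aa0 Jb0)).
    + move=> i b r [i0 [Ii0 ->]] [b0 [Jb0 ->]] Rr; rewrite -rmorphM.
      by apply: (proj2 (Hsub (i0 * b0) (im_prod Ii0 Jb0))).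
    + move=> H; right => b Jb; split; first exact: hJA.
      by move=> r Rr; apply: H => //; exists b.
    + move=> H; left => i Ii; split; first exact: hIA.
      by move=> r Rr; apply: H => //; exists i.
have NP : forall j n, (j < m)%N -> prime_radical A n -> PB j n.
  by move=> j n hj [_ Hn]; apply: Hn; apply: Pprime.
have key : forall k y, ideal_pow A (prime_radical A) k y ->
    forall j r, (j <= m)%N -> R j r -> R (j - k)%N (f y * r).
  elim=> [|k IH] y /=.
    by move=> Ay j r _ Rr; rewrite subn0; apply: stabA.
  elim=> [x n Hx Hn| |u v _ Hu _ Hv] j r hj Rr.
  - rewrite rmorphM -mulrA; case: j hj Rr => [|j] hj Rr.
      by rewrite (H0 _ Rr) mulr0 mulr0; apply: R0.
    rewrite subSS; apply: IH => //; first exact: ltnW.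
    by apply: (proj2 (NP j n hj Hn)).
  - by rewrite rmorph0 mul0r.
  - rewrite rmorphD mulrDl; apply: closedD; [exact: (proj1 (Hg _))|auto|auto].
move=> x Hx; apply: finj; rewrite rmorph0.
have := key t x Hx m 1 (leqnn m) Hm.
have -> : (m - t = 0)%N by apply/eqP; rewrite subn_eq0.
by move/H0; rewrite mulr1.
Qed.

Lemma right_case (B Qr : nzRingType) (A : B -> Prop) (t : nat) (f : {rmorphism B -> Qr}) :
  subring A -> injective f -> right_length Qr t ->
  forall x : B, ideal_pow A (prime_radical A) t x -> x = 0.
Proof.
move=> sA finj Hlen.
have Hlen' : left_length Qr^c t by exact: Hlen.
pose As := fun q : Qr => exists a, A a /\ q = f a.
have [m [R [hmt [HR Hprime]]]] := core (As : Qr^c -> Prop) Hlen'.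
have [H0 [Hm [Hg Hs]]] := HR.
have R0 : forall j, R j 0 by move=> j; apply: closed0; exact: (proj1 (Hg j)).
have RD : forall j x y, R j x -> R j y -> R j (x + y).
  by move=> j x y; apply: closedD; exact: (proj1 (Hg j)).
have RB : forall j x y, R j x -> R j y -> R j (x - y).
  by move=> j x y; apply: closedB; exact: (proj1 (Hg j)).
have stabA : forall j a (r : Qr), A a -> R j r -> R j (r * f a).
  by move=> j a r Aa Rr; exact: (proj2 (Hg j) (f a) r (ex_intro _ a (conj Aa erefl)) Rr).
have Hprime' : forall j, (j < m)%N -> forall I J : Qr -> Prop,
    (forall x, I x -> As x) -> (forall x, J x -> As x) ->
    (forall a b : Qr, As a -> J b -> J (b * a)) ->
    (forall i b r : Qr, I i -> J b -> R j.+1 r -> R j (r * (b * i))) ->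
    (forall b r : Qr, J b -> R j.+1 r -> R j (r * b)) \/ (forall i r : Qr, I i -> R j.+1 r -> R j (r * i)).
  exact: Hprime.
case: sA => [A1 [AB AM]].
pose PB j := fun x => A x /\ forall r : Qr, R j.+1 r -> R j (r * f x).
have Pprime : forall j, (j < m)%N -> prime_ideal A (PB j).
  move=> j hj; split; [split; [|split; [|split]] | split].
  - by move=> x [].
  - split; first exact: sub_A0.
    by move=> r _; rewrite rmorph0 mulr0.
  - move=> x y [Ax Hx] [Ay Hy]; split; first exact: AB.
    move=> r Rr; rewrite rmorphB mulrBr; apply: RB; auto.
  - move=> a x Aa [Ax Hx]; split; split; try exact: AM.
    + by move=> r Rr; rewrite rmorphM mulrA; apply: Hx; apply: stabA.
    + by move=> r Rr; rewrite rmorphM mulrA; apply: stabA => //; apply: Hx.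
  - exists 1; split => // -[_ H]; have [_ [x [Rx nRx]]] := Hs j hj.
    by apply: nRx; have := H x Rx; rewrite rmorph1 mulr1.
  - move=> I J [hIA [_ [_ hIm]]] [hJA _] Hsub.
    have := Hprime' j hj (fun q => exists b, J b /\ q = f b) (fun q => exists i, I i /\ q = f i).
    case.
    + by move=> q [i [Ii ->]]; exists i; split => //; apply: hJA.
    + by move=> q [i [Ii ->]]; exists i; split => //; apply: hIA.
    + move=> a b [a0 [Aa0 ->]] [b0 [Ib0 ->]]; exists (b0 * a0); split; last by rewrite rmorphM.
      exact: (proj2 (hIm _ _ Aa0 Ib0)).
    + move=> i b r [i0 [Ji0 ->]] [b0 [Ib0 ->]] Rr; rewrite -rmorphM.
      by apply: (proj2 (Hsub (b0 * i0) (im_prod Ib0 Ji0))).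
    + move=> H; left => b Ib; split; first exact: hIA.
      by move=> r Rr; apply: H => //; exists b.
    + move=> H; right => i Ji; split; first exact: hJA.
      by move=> r Rr; apply: H => //; exists i.
have NP : forall j n, (j < m)%N -> prime_radical A n -> PB j n.
  by move=> j n hj [_ Hn]; apply: Hn; apply: Pprime.
have key : forall k y, ideal_pow A (prime_radical A) k y ->
    forall j (r : Qr), (j <= m)%N -> R j r -> R (j - k)%N (r * f y).
  elim=> [|k IH] y /=.
    by move=> Ay j r _ Rr; rewrite subn0; apply: stabA.
  elim=> [x n Hx Hn| |u v _ Hu _ Hv] j r hj Rr.
  - rewrite rmorphM mulrA.
    have := IH x Hx j r hj Rr.
    case E: (j - k)%N => [|j'] H.
      by rewrite (H0 _ H) mul0r subnS E; apply: R0.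
    rewrite subnS E /=; apply: (proj2 (NP j' n _ Hn)) => //.
    by move: E hj; clear; lia.
  - by rewrite rmorph0 mulr0.
  - by rewrite rmorphD mulrDr; apply: RD; auto.
move=> x Hx; apply: finj; rewrite rmorph0.
have := key t x Hx m 1 (leqnn m) Hm.
have -> : (m - t = 0)%N by apply/eqP; rewrite subn_eq0.
by move/H0; rewrite mul1r.
Qed.

Unset Implicit Arguments. Set Strict Implicit. Set Printing Implicit Defensive.

Theorem lemma2p8 (B : nzRingType) (A : B -> Prop) (t : nat) :
  prime_ring B -> subring A -> goldie_rank B t ->
  forall x : B, ideal_pow A (prime_radical A) t x -> x = 0.
Proof.
move=> _ sA [[_ [Qr [f [[finj _] Hlen]]]] | [_ [Qr [f [[finj _] Hlen]]]]].
  exact: left_case sA finj Hlen.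
exact: right_case sA finj Hlen.
Qed.
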